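(* Let $M$ be a large positive parameter and let $\mathcal{X}$ be any subset of $\{1,2,\ldots,10^M\}$. For a large positive parameter $N$, let $\mathcal{J}(N)$ denote the number of solutions $(x,y,p)$ of $$x\equiv y \pmod p;\qquad x,y\in\mathcal{X},\quad p\le N,\ p \text{ prime}.$$ Then $$\mathcal{J}(N)=\pi(N)\,|\mathcal{X}|+O\!\left(\frac{|\mathcal{X}|^2 M}{\log M}\right),$$ where the implied constant is absolute.
   Context: $\pi(N)$ denotes the number of primes $p\le N$. *)

(* Defs.v *)
From mathcomp Require Import all_boot.
From Stdlib Require Import Reals.

Definition primepi (N : nat) : nat := count prime (iota 0 N.+1).

(* J(N) = number of triples (x,y,p) with x,y in X, p <= N prime, x = y mod p.
   X is a duplicate-free list (a finite set of naturals). *)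
Definition Jcount (X : seq nat) (N : nat) : nat :=
  \sum_(x <- X) \sum_(y <- X)
     count (fun p => prime p && (x == y %[mod p])) (iota 0 N.+1).

(* Main.v *)
Require Import Defs.
From mathcomp Require Import all_boot.
From Stdlib Require Import Reals.
From mathcomp Require Import all_boot zify.

Lemma pow_le_fact k j : j ^ (k - j) <= k`!.
Proof.
elim: k => [|k IH]; first by rewrite sub0n expn0.
case: (leqP j k) => hjk.
- rewrite subSn // expnS factS. apply: leq_mul => //. lia.
- have -> : k.+1 - j = 0 by lia. by rewrite expn0 fact_gt0.
Qed.

Lemma path_prod (s : seq nat) a :
  path ltn a s -> \prod_(i < size s) (a.+1 + i) <= \prod_(x <- s) x.
Proof.
elim: s a => [|x s IH] a /=; first by rewrite big_ord0 big_nil.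
move=> /andP [hax hp].
rewrite big_ord_recl big_cons /=.
apply: leq_mul; first by rewrite addn0.
apply: leq_trans (IH x hp).
apply: leq_prod => i _. rewrite /bump /=. lia.
Qed.

Lemma fact_le_primes n : 0 < n -> (size (primes n))`! <= n.
Proof.
move=> n0.
have h1 : (size (primes n))`! <= \prod_(p <- primes n) p.
  have := path_prod (primes n) 0.
  have hp : path ltn 0 (primes n).
    have := sorted_primes n; have := all_prime_primes n.
    case: (primes n) => [|p s] //= /andP [pp _] ->. by rewrite prime_gt0.
  move/(_ hp). rewrite fact_prod big_add1 /= big_mkord.
  apply: leq_trans. apply: leq_prod => i _; lia.
apply: leq_trans h1 _.
rewrite {2}(prod_prime_decomp n0) prime_decompE big_map.
rewrite big_seq_cond [X in _ <= X]big_seq_cond.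
apply: leq_prod => p /andP [hp _].
have : 0 < logn p n by rewrite logn_gt0.
move: hp; rewrite mem_primes => /and3P [pp _ _].
case: (logn p n) => // e _. rewrite expnS -{1}(muln1 p). apply: leq_mul => //. by rewrite expn_gt0 prime_gt0.
Qed.
From Stdlib Require Import Reals Lra Psatz.

Lemma INR_expn j e : INR (expn j e) = (INR j ^ e)%R.
Proof.
elim: e => [|e IH]; first by rewrite expn0.
by rewrite expnS mult_INR IH.
Qed.

Lemma ln_le' x y : (0 < x)%R -> (x <= y)%R -> (ln x <= ln y)%R.
Proof.
move=> hx hxy; case: (Rle_lt_or_eq_dec _ _ hxy) => h.
- left; exact: ln_increasing.
- rewrite h; exact: Rle_refl.
Qed.

Lemma ln10_lt4 : (ln 10 < 4)%R.
Proof.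
have e1 : (2 < exp 1)%R by have := exp_ineq1 1 R1_neq_R0; lra.
have e2 : exp 2 = (exp 1 * exp 1)%R by rewrite -exp_plus; f_equal; lra.
have e4 : exp 4 = (exp 2 * exp 2)%R by rewrite -exp_plus; f_equal; lra.
have e22 : (4 < exp 1 * exp 1)%R by nra.
have : (10 < exp 4)%R by rewrite e4 e2; nra.
move=> h; rewrite -(ln_exp 4); apply: ln_increasing; lra.
Qed.

Lemma core (M : R) k n : (2 <= M)%R -> (k`! <= n)%N -> (INR n <= Rpower 10 M)%R ->
  (INR k <= 16 * M / ln M)%R.
Proof.
move=> hM hkn hn.
have lnM : (0 < ln M)%R by rewrite -ln_1; apply: ln_increasing; lra.
set s := sqrt M.
have s0 : (0 < s)%R by apply: sqrt_lt_R0; lra.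
have ss : (s * s = M)%R by apply: sqrt_sqrt; lra.
have lnMs : (ln M = 2 * ln s)%R by rewrite -ss ln_mult //; lra.
have lns : (ln s <= s - 1)%R by have := exp_ineq1_le (ln s); rewrite exp_ln //; lra.
have hln10 := ln10_lt4.
have npos : (0 < INR n)%R.
  apply: lt_0_INR; apply/ltP; exact: leq_trans (fact_gt0 k) hkn.
have lnn : (ln (INR n) <= M * ln 10)%R.
  rewrite -ln_Rpower; exact: ln_le'.
suff : (INR k * ln M <= 16 * M)%R.
  move=> h; apply: (Rmult_le_reg_r (ln M)) => //.
  rewrite /Rdiv Rmult_assoc Rinv_l; lra.
set j := k./2.
have hk2 := odd_double_half k; rewrite -mul2n in hk2.
have ob := leq_b1 (odd k).
have hA : (INR k <= 2 * INR j + 1)%R.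
  have : (k <= 2 * j + 1)%N by lia.
  move/leP/le_INR; rewrite plus_INR mult_INR /=; lra.
have hB : (INR k <= 2 * INR (k - j))%R.
  have : (k <= 2 * (k - j))%N by lia.
  move/leP/le_INR; rewrite mult_INR /=; lra.
have k0 := pos_INR k.
have a0 := pos_INR (k - j).
case: (Rle_or_lt (INR j) s) => hj.
- have : (INR k <= 2 * s + 1)%R by lra.
  move=> h1. rewrite lnMs.
  apply: Rle_trans (_ : (2 * s + 1) * (2 * (s - 1)) <= _)%R.
  + apply: Rmult_le_compat; lra.
  + nra.
- have jpos : (0 < INR j)%R by lra.
  have hlj : (ln s < ln (INR j))%R by apply: ln_increasing.
  have hpow : (INR (k - j) * ln (INR j) <= M * ln 10)%R.
    rewrite -ln_pow //; apply: Rle_trans lnn; apply: ln_le'.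
      exact: pow_lt.
    rewrite -INR_expn; apply: le_INR; apply/leP.
    exact: leq_trans (pow_le_fact k j) hkn.
  have lj0 : (0 < ln (INR j))%R by lra.
  nra.
Qed.

Lemma count_le x y N : x != y ->
  (count (fun p => prime p && (x == y %[mod p])) (iota 0 N.+1) <= size (primes (maxn x y - minn x y)))%N.
Proof.
move=> nxy; rewrite -size_filter; apply: uniq_leq_size.
  by apply: filter_uniq; apply: iota_uniq.
move=> p; rewrite mem_filter mem_primes => /andP [/andP [pp e] _].
rewrite pp /=.
have [hxy|hxy] := leqP x y.
- 
  have hlt : (x < y)%N by rewrite ltn_neqAle nxy hxy.
  rewrite subn_gt0 hlt /= -eqn_mod_dvd //; by rewrite eq_sym.
- 
  rewrite subn_gt0 hxy /= -eqn_mod_dvd //; exact: ltnW.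
Qed.

Lemma sum_INR_le (I : eqType) (r : seq I) (P : pred I) (F : I -> nat) (B : R) :
  (forall i, i \in r -> P i -> (INR (F i) <= B)%R) -> (0 <= B)%R ->
  (INR (\sum_(i <- r | P i) F i) <= INR (size r) * B)%R.
Proof.
elim: r => [|a r IH] hF hB; first by rewrite big_nil /=; lra.
rewrite big_cons (_ : size (a :: r) = (size r).+1) // S_INR.
have IH' := IH (fun i hi => hF i (ltac:(by rewrite in_cons hi orbT))) hB.
case: (P a) (hF a (mem_head a r)) => h.
- rewrite plus_INR; have := h isT; lra.
- lra.
Qed.

Lemma sum_const_pp (X : seq nat) c : (\sum_(x <- X) c = c * size X)%N.
Proof. elim: X => [|a X IH]; first by rewrite big_nil muln0. by rewrite big_cons IH /= mulnS. Qed.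

Theorem theorem1 :
  exists (C M0 : R) (N0 : nat), (0 < C)%R /\
  forall (M : R) (X : seq nat) (N : nat),
    (M0 <= M)%R -> (N0 <= N)%N ->
    uniq X ->
    (forall x, x \in X -> (1 <= x)%N /\ (INR x <= Rpower 10 M)%R) ->
    (Rabs (INR (Jcount X N) - INR (primepi N) * INR (size X))
       <= C * (INR (size X) ^ 2 * M / ln M))%R.
Proof.
exists 16%R, 2%R, 0%N; split; first lra.
move=> M X N hM _ uX hX.
have lnM : (0 < ln M)%R by rewrite -ln_1; apply: ln_increasing; lra.
set c := fun x y => count (fun p => prime p && (x == y %[mod p])) (iota 0 N.+1).
set Rt := (\sum_(x <- X) \sum_(y <- X | y != x) c x y)%N.
have hJ : Jcount X N = (primepi N * size X + Rt)%N.
  rewrite /Jcount /Rt -sum_const_pp -big_split /=.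
  rewrite big_seq [X in _ = X]big_seq; apply: eq_bigr => x hx.
  rewrite (bigD1_seq x hx uX) /=.
  congr (_ + _)%N.
  rewrite /primepi; apply: eq_count => p; by rewrite eqxx andbT.
set B := (16 * M / ln M)%R.
have B0 : (0 <= B)%R.
  rewrite /B /Rdiv; apply: Rmult_le_pos; [lra|]; left; exact: Rinv_0_lt_compat.
have hR : (INR Rt <= INR (size X) * (INR (size X) * B))%R.
  apply: sum_INR_le; last by apply: Rmult_le_pos => //; exact: pos_INR.
  move=> x hx _; apply: sum_INR_le => // y hy nyx.
  have nxy : x != y by rewrite eq_sym.
  apply: Rle_trans (_ : INR (size (primes (maxn x y - minn x y))) <= B)%R.
    by apply: le_INR; apply/leP; apply: count_le.
  have hd : (0 < maxn x y - minn x y)%N.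
    have [hxy|hxy] := leqP x y.
    - rewrite subn_gt0 ltn_neqAle nxy hxy //.
    - rewrite subn_gt0 hxy //.
  apply: (core M _ (maxn x y - minn x y)) => //; first exact: fact_le_primes.
  have hm : (maxn x y - minn x y <= maxn x y)%N by apply: leq_subr.
  apply: Rle_trans (le_INR _ _ (elimT leP hm)) _.
  have [hxy|hxy] := leqP x y.
  - exact: (proj2 (hX y hy)).
  - exact: (proj2 (hX x hx)).
rewrite hJ plus_INR mult_INR.
have -> : (INR (primepi N) * INR (size X) + INR Rt - INR (primepi N) * INR (size X) = INR Rt)%R by ring.
rewrite Rabs_right; last by apply: Rle_ge; exact: pos_INR.
apply: Rle_trans hR _; right; rewrite /B; field; lra.
Qed.
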